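(* Let $s_0\le s_1\le\cdots\le s_t$ be positive numbers and define $a_k=\sum_{i=0}^k\frac{s_i}{s_k}$ for $k\le t$. Then \[ s_ta_t^2\le 2\sum_{k=0}^ts_ka_k. \] *)

(* Defs.v *)
From mathcomp Require Import all_boot all_order all_algebra.
Set Implicit Arguments. Unset Strict Implicit. Unset Printing Implicit Defensive.
Import Order.TTheory GRing.Theory Num.Theory.
Local Open Scope ring_scope.

Definition acoef (R : realFieldType) (s : nat -> R) (k : nat) : R :=
  \sum_(0 <= i < k.+1) s i / s k.

(* Main.v *)
Require Import Defs.
From mathcomp Require Import all_boot all_order all_algebra.
From mathcomp Require Import ring lra.
Import Order.TTheory GRing.Theory Num.Theory.
Local Open Scope ring_scope.

Lemma aux (R : realFieldType) (s : nat -> R) (t : nat)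
  (hpos : forall k, (k <= t)%N -> 0 < s k)
  (hmono : forall k, (k < t)%N -> s k <= s k.+1) :
  (\sum_(0 <= i < t.+1) s i) ^+ 2 / s t <=
  2 * \sum_(0 <= k < t.+1) \sum_(0 <= i < k.+1) s i.
Proof.
elim: t hpos hmono => [|t IH] hpos hmono.
  rewrite !big_nat1 expr2 -mulrA divff ?mulr1; last by rewrite gt_eqF // hpos.
  have := hpos 0%N isT; lra.
have IH' := IH (fun k hk => hpos k (leqW hk)) (fun k hk => hmono k (leqW hk)).
set S := \sum_(0 <= i < t.+1) s i in IH'.
have hS0 : 0 <= S.
  rewrite /S big_seq_cond; apply: sumr_ge0 => i /andP[hi _].
  rewrite mem_index_iota in hi; case/andP: hi => _ hi.
  by apply: ltW; apply: hpos; rewrite leqW // -ltnS.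
have Sd : \sum_(0 <= i < t.+2) s i = S + s t.+1 by rewrite big_nat_recr.
rewrite Sd [X in _ <= 2 * X]big_nat_recr //= Sd.
have p1 : 0 < s t.+1 by apply: hpos.
have p0 : 0 < s t by apply: hpos; apply: leqW.
have le01 : s t <= s t.+1 by apply: hmono.
have key : S ^+ 2 / s t.+1 <= S ^+ 2 / s t.
  apply: ler_wpM2l; first by apply: sqr_ge0.
  by rewrite lef_pV2 ?posrE.
have e : (S + s t.+1) ^+ 2 / s t.+1 = S ^+ 2 / s t.+1 + 2 * S + s t.+1.
  by field; rewrite gt_eqF.
rewrite e; lra.
Qed.

Theorem lemma25 (R : realFieldType) (t : nat) (s : nat -> R)
  (hpos : forall k, (k <= t)%N -> 0 < s k)
  (hmono : forall k, (k < t)%N -> s k <= s k.+1) :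
  s t * (acoef s t) ^+ 2 <= 2 * \sum_(0 <= k < t.+1) s k * acoef s k.
Proof.
have hA : forall k, acoef s k = (\sum_(0 <= i < k.+1) s i) / s k.
  by move=> k; rewrite /acoef mulr_suml.
have ->: \sum_(0 <= k < t.+1) s k * acoef s k =
         \sum_(0 <= k < t.+1) \sum_(0 <= i < k.+1) s i.
  apply: eq_big_nat => k /andP[_ hk].
  have p : 0 < s k by apply: hpos.
  by rewrite hA mulrCA divff ?mulr1 // gt_eqF.
have p : 0 < s t by apply: hpos.
have -> : s t * acoef s t ^+ 2 = (\sum_(0 <= i < t.+1) s i) ^+ 2 / s t.
  by rewrite hA; field; rewrite gt_eqF.
exact: aux.
Qed.
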